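(* Let $p\in(0,1)$, $\alpha\in(0,1]$, $0\le h_1<\dots<h_N\le1$, and nonnegative weights $f_0^S(h_j),f_0^{NS}(h_j)$, $j=1,\dots,N$, each summing to $1$; set $f_0(h_j)=\alpha f_0^S(h_j)+(1-\alpha)f_0^{NS}(h_j)$ with $f_0(h_N)>0$, and $f_0([h_i,1])=\sum_{j\ge i}f_0(h_j)$. Let $m_0^{S,j}\in[-1,1]$ be given. Let $f^{NS,1},\dots,f^{NS,N}\in C([0,+\infty),P([-1,1]))$ (weak topology) with initial data $f_0^{NS,i}$, write $m^{NS,j}(t)=\int_{-1}^1w\,f^{NS,j}(t,dw)$, $$m(t)=\alpha\sum_{j}f_0^S(h_j)m_0^{S,j}+(1-\alpha)\sum_jf_0^{NS}(h_j)m^{NS,j}(t),\quad \beta_i(t)=\alpha\sum_{j\ge i}f_0^S(h_j)m_0^{S,j}+(1-\alpha)\sum_{j\ge i}f_0^{NS}(h_j)m^{NS,j}(t),$$ and assume that for all $i$, $t\ge0$ and $\phi\in C^1([-1,1])$, $$\int\phi\,df^{NS,i}(t)=\int\phi\,df_0^{NS,i}+\int_0^t\!\!\int_{-1}^1\phi'(w)\Big[p\big(m(s)-w\big)+(1-p)\big(\beta_i(s)-f_0([h_i,1])w\big)\Big]f^{NS,i}(s,dw)\,ds.$$ Let $A=(A_{ij})$ be the $N\times N$ matrix with $A_{ii}=(1-\alpha)f_0^{NS}(h_i)-\big(p+(1-p)f_0([h_i,1])\big)$ and $A_{ij}=(1-\alpha)\big[p+(1-p)1_{\{j\ge i\}}\big]f_0^{NS}(h_j)$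 for $i\ne j$, and $B=(B_1,\dots,B_N)^T$ with $B_i=\alpha\sum_{j=1}^Nm_0^{S,j}\big(p+(1-p)1_{\{j\ge i\}}\big)f_0^S(h_j)$. Then $A$ is invertible and, with $(m_\infty^{NS,1},\dots,m_\infty^{NS,N})^T=-A^{-1}B$, we have $f^{NS,i}(t)\to\delta_{m_\infty^{NS,i}}$ weakly as $t\to+\infty$ for every $i=1,\dots,N$.
   Context: $P([-1,1])$ is the set of Borel probability measures on $[-1,1]$; $\delta_x$ is the Dirac mass at $x$. Interpretation: $f^{NS,i}(t)$ is the opinion distribution of non-stubborn individuals at hierarchy level $h_i$, $\alpha$ the fraction of stubborn individuals, $m_0^{S,j}$ the mean opinion of stubborn individuals at level $h_j$, $p$ the probability that a lower-ranked individual convinces a higher-ranked one. *)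

(* Defs.v *)
From HB Require Import structures.
From mathcomp Require Import all_boot all_order all_algebra.
From mathcomp Require Import all_classical all_reals all_analysis.
Set Implicit Arguments. Unset Strict Implicit. Unset Printing Implicit Defensive.
Import Order.TTheory GRing.Theory Num.Theory.
Import numFieldNormedType.Exports.
Local Open Scope classical_set_scope.
Local Open Scope ring_scope.

(* Indices j = 1..N are represented by 'I_N
   (0-based, same order). *)

Section Defs.
Variables (R : realType) (N : nat).

Definition intm (mu : probability R R) (phi : R -> R) : R :=
  Rintegral mu `[-1, 1] phi.

Definition f0w (alpha : R) (fS fNS : 'I_N -> R) (j : 'I_N) : R :=
  alpha * fS j + (1 - alpha) * fNS j.

Definition f0tail (alpha : R) (fS fNS : 'I_N -> R) (i : 'I_N) : R :=
  \sum_(j < N | (i <= j)%N) f0w alpha fS fNS j.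

Definition mNS (f : 'I_N -> R -> probability R R) (j : 'I_N) (t : R) : R :=
  intm (f j t) id.

Definition mtot (alpha : R) (fS fNS mS : 'I_N -> R)
  (f : 'I_N -> R -> probability R R) (t : R) : R :=
  alpha * (\sum_(j < N) fS j * mS j)
  + (1 - alpha) * (\sum_(j < N) fNS j * mNS f j t).

Definition beta (alpha : R) (fS fNS mS : 'I_N -> R)
  (f : 'I_N -> R -> probability R R) (i : 'I_N) (t : R) : R :=
  alpha * (\sum_(j < N | (i <= j)%N) fS j * mS j)
  + (1 - alpha) * (\sum_(j < N | (i <= j)%N) fNS j * mNS f j t).

Definition Amat (p alpha : R) (fS fNS : 'I_N -> R) : 'M[R]_N :=
  \matrix_(i, j)
    if i == j then (1 - alpha) * fNS i - (p + (1 - p) * f0tail alpha fS fNS i)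
    else (1 - alpha) * (p + (1 - p) * ((i <= j)%N)%:R) * fNS j.

Definition Bvec (p alpha : R) (fS mS : 'I_N -> R) : 'cV[R]_N :=
  \col_i (alpha * \sum_(j < N) mS j * (p + (1 - p) * ((i <= j)%N)%:R) * fS j).

End Defs.

(* Main.v *)
Require Import Defs.
From HB Require Import structures.
From mathcomp Require Import all_boot all_order all_algebra.
From mathcomp Require Import all_classical all_reals all_analysis.
From mathcomp Require Import ring lra.
Import Order.TTheory GRing.Theory Num.Theory.
Import numFieldNormedType.Exports.
Local Open Scope classical_set_scope.
Local Open Scope ring_scope.


Section S.
Context {R : realType}.

Lemma cont_int (mu : {measure set R -> \bar R}) (a b : R) (g : R -> R) :
  (mu `[a, b]%classic < +oo)%E -> {within `[a, b], continuous g} ->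
  mu.-integrable `[a, b] (EFin \o g).
Proof.
move=> muf cg; apply: measurable_bounded_integrable => //.
  exact: measurable_realfun.subspace_continuous_measurable_fun.
have := compact_bounded (continuous_compact cg (@segment_compact R a b)).
move=> [M [Mr HM]]; exists M; split => // y My x Ax; by apply: (HM y My); exists x.
Qed.

Lemma cont_intL (a b : R) (g : R -> R) :
  {within `[a, b], continuous g} ->
  lebesgue_measure.-integrable `[a, b] (EFin \o g).
Proof.
move=> cg; apply: measurable_bounded_integrable => //.
- have := lebesgue_measure_itv `[a, b]; rewrite /= => ->.
  by case: ifP => _; rewrite ?ltry.
- exact: measurable_realfun.subspace_continuous_measurable_fun.
have := compact_bounded (continuous_compact cg (@segment_compact R a b)).
move=> [M [Mr HM]]; exists M; split => // y My x Ax.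
by apply: (HM y My); exists x.
Qed.

Definition C1 (g : R -> R) := {within `[-1, 1], continuous g}.

Lemma C1D g h : C1 g -> C1 h -> C1 (fun w => g w + h w).
Proof. by move=> cg ch x; apply: cvgD; [exact: cg|exact: ch]. Qed.
Lemma C1M g h : C1 g -> C1 h -> C1 (fun w => g w * h w).
Proof. by move=> cg ch x; apply: cvgM; [exact: cg|exact: ch]. Qed.
Lemma C1N g : C1 g -> C1 (fun w => - g w).
Proof. by move=> cg x; apply: cvgN; exact: cg. Qed.
Lemma C1c c : C1 (fun _ => c).
Proof. by move=> x; exact: cvg_cst. Qed.
Lemma C1id : C1 id.
Proof. by apply: continuous_subspaceT => x. Qed.

Lemma intm_int (mu : probability R R) g : C1 g ->
  mu.-integrable `[-1, 1] (EFin \o g).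
Proof.
move=> cg; apply: cont_int => //.
by apply: (le_lt_trans (probability_le1 _ _)) => //; rewrite ltry.
Qed.

Lemma intmD (mu : probability R R) g h : C1 g -> C1 h ->
  intm mu (fun w => g w + h w) = intm mu g + intm mu h.
Proof. by move=> cg ch; rewrite /intm RintegralD //; exact: intm_int. Qed.

Lemma intmZ (mu : probability R R) k g : C1 g ->
  intm mu (fun w => k * g w) = k * intm mu g.
Proof. by move=> cg; rewrite /intm RintegralZl //; exact: intm_int. Qed.

Lemma intmN (mu : probability R R) g : C1 g ->
  intm mu (fun w => - g w) = - intm mu g.
Proof.
move=> cg; rewrite -mulN1r -intmZ //; rewrite /intm.
by apply: eq_Rintegral => x _; rewrite mulN1r.
Qed.

Lemma intm_cst (mu : probability R R) c : mu `[-1, 1]%classic = 1%E ->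
  intm mu (fun _ => c) = c.
Proof.
move=> m1; rewrite /intm Rintegral_cst //.
have H : fine (mu `[-1, 1]%classic) = 1 by rewrite m1.
by rewrite -[RHS]mulr1; congr (_ * _); exact: H.
Qed.

Lemma intm_le (mu : probability R R) g h : C1 g -> C1 h ->
  (forall w, -1 <= w <= 1 -> g w <= h w) -> intm mu g <= intm mu h.
Proof.
by move=> cg ch gh; apply: le_Rintegral => //; exact: intm_int.
Qed.

Lemma intm_norm (mu : probability R R) g : C1 g ->
  `|intm mu g| <= intm mu (fun w => `|g w|).
Proof. by move=> cg; apply: le_normr_Rintegral => //; exact: intm_int. Qed.

End S.

Section S2.
Context {R : realType}.

Lemma is_derive1_val {f : R -> R} {x df : R} : is_derive x (1:R) f df -> derive1 f x = df.
Proof. by move=> H; rewrite derive1E; exact: derive_val. Qed.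

Lemma is_derive_ext {f g : R -> R} {x df : R} :
  (forall y, f y = g y) -> is_derive x (1:R) f df -> is_derive x (1:R) g df.
Proof. move=> fg; apply: near_eq_is_derive; near=> y; exact: fg. Unshelve. all: by end_near. Qed.

Lemma is_derive_scal (k x : R) : is_derive x (1:R) (fun t => k * t) k.
Proof.
apply: is_derive_ext (is_derive_eq (is_deriveZ k (is_derive_id x (1:R))) _) => //.
by rewrite /GRing.scale /= mulr1.
Qed.

Lemma is_deriveM' {f g : R -> R} {x df dg : R} :
  is_derive x (1:R) f df -> is_derive x (1:R) g dg ->
  is_derive x (1:R) (fun t => f t * g t) (f x * dg + g x * df).
Proof.
move=> H1 H2; apply: is_derive_ext (is_deriveM H1 H2) => //.
Qed.

Lemma decay (w w' : R -> R) (k T : R) : 0 < k ->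
  (forall t, T <= t -> is_derive t 1 w (w' t) /\ w' t <= - k * w t) ->
  forall e, 0 < e -> \forall t \near +oo, w t <= e.
Proof.
move=> k0 Hw e e0.
pose v := fun t => expR (k * t) * w t.
have dv : forall t, T <= t ->
    is_derive t 1 v (expR (k * t) * (w' t + k * w t)).
  move=> t tT; have [H1 _] := Hw t tT.
  have H2 : is_derive t 1 (fun t => expR (k * t)) (expR (k * t) * k).
    have := @is_derive1_comp R expR (fun t => k * t) t (expR (k * t)) k.
    by apply; exact: is_derive_scal.
  apply: (is_derive_eq (is_deriveM' H2 H1)).
  by ring.
have vle : forall t, T <= t -> v t <= v T.
  move=> t tT; apply: (@ler0_derive1_nincry R v T) => //.
  - move=> x; rewrite in_itv /= andbT => /ltW xT.
    by have := dv x xT => /(@ex_derive R).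
  - move=> x; rewrite in_itv /= andbT => /ltW xT.
    rewrite (is_derive1_val (dv x xT)).
    have [_ H] := Hw x xT.
    rewrite pmulr_rle0 ?expR_gt0 //.
    by rewrite -lerBrDr sub0r -mulNr.
  - apply: derivable_within_continuous => x.
    by rewrite in_itv /= andbT => xT; have := dv x xT => /(@ex_derive R).
pose C := `|v T|.
near=> t.
have tT : T <= t by near: t; apply: nbhs_pinfty_ge; rewrite num_real.
have t0 : 0 <= t by near: t; apply: nbhs_pinfty_ge; rewrite num_real.
have tC : C / (k * e) <= t by near: t; apply: nbhs_pinfty_ge; rewrite num_real.
have h1 : expR (k * t) * w t <= C by apply: (le_trans (vle t tT)); exact: ler_norm.
have ekt : 0 < expR (k * t) by exact: expR_gt0.
have h2 : w t <= C / expR (k * t) by rewrite ler_pdivlMr // mulrC.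
apply: (le_trans h2).
rewrite ler_pdivrMr //.
apply: (le_trans _ (ler_wpM2l (ltW e0) (expR_ge1Dx (k * t)))).
move: tC; rewrite ler_pdivrMr ?mulr_gt0 // => tC.
have : 0 <= C by exact: normr_ge0.
nra.
Unshelve. all: by end_near.
Qed.
End S2.

Section S3.
Context {R : realType}.

Lemma within_at (G : R -> R) t : {within `[0, +oo[, continuous G} -> 0 < t ->
  {for t, continuous G}.
Proof.
move=> cG t0.
have : {within `]0, +oo[, continuous G}.
  by apply: continuous_subspaceW cG; apply: subset_itv; rewrite ?bnd_simp.
move=> H; have := (continuous_open_subspace G (@interval_open R (BRight 0) (BInfty _ false) isT isT)).
move=> E; rewrite E in H; apply: H.
by apply/mem_set; rewrite /= in_itv /= andbT.
Qed.

Lemma ltrDl_tmp0 (t : R) : t < t + 1. Proof. by rewrite ltrDl. Qed.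

Lemma ftc_deriv (F G : R -> R) : {within `[0, +oo[, continuous G} ->
  (forall t, 0 <= t -> F t = F 0 + Rintegral lebesgue_measure `[0, t]%classic G) ->
  forall t : R, 0 < t -> is_derive t (1:R) F (G t).
Proof.
move=> cG HF t t0.
have sub : `[0, t + 1]%classic `<=` `[0, +oo[%classic.
  by apply: subset_itv; rewrite ?bnd_simp.
have cG' : {within `[0, t + 1], continuous G} by apply: continuous_subspaceW cG.
have [d1 d2] := @continuous_FTC1_closed R G 0 t (t + 1) (ltrDl_tmp0 t)
  (@cont_intL R 0 (t+1) G cG') t0 (@within_at G t cG t0).
have H : is_derive t (1:R) (fun x => F 0 + \int[lebesgue_measure]_(s in `[0, x]) G s) (G t).
  have dPI : is_derive t (1:R) (fun x => \int[lebesgue_measure]_(s in `[0, x]) G s) (G t).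
    by apply: DeriveDef d1 _; rewrite -derive1E.
  apply: is_derive_ext (is_derive_eq (is_deriveD (is_derive_cst (F 0) t 1) dPI) _) => //.
  by rewrite add0r.
apply: near_eq_is_derive H.
near=> y; rewrite [RHS]HF //; apply: ltW.
near: y; exact: lt_nbhsr.
Unshelve. all: by end_near.
Qed.
End S3.

Section S4.
Context {R : realType}.

Lemma within_eps (phi : R -> R) (c : R) : {within `[-1, 1], continuous phi} ->
  -1 <= c <= 1 -> forall e, 0 < e ->
  exists2 d, 0 < d & forall w, -1 <= w <= 1 -> `|c - w| < d -> `|phi c - phi w| < e.
Proof.
move=> cphi cI e e0.
have Ac : `[-1, 1]%classic c by rewrite /= in_itv.
have H := cphi c.
move/cvgrPdist_lt : H => /(_ e e0).
move/(nbhs_subspace_ex _ Ac) => [V nV UV].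
move/nbhs_ballP : nV => [d d0 Hd].
exists d => // w wI cw.
have : (V `&` `[-1, 1]%classic) w.
  by split; [apply: Hd; rewrite /ball /= | rewrite /= in_itv].
by rewrite -UV => -[].
Qed.

Lemma bounded_on (phi : R -> R) : {within `[-1, 1], continuous phi} ->
  exists2 M, 0 <= M & forall w, -1 <= w <= 1 -> `|phi w| <= M.
Proof.
move=> cphi.
have := compact_bounded (continuous_compact cphi (@segment_compact R (-1) 1)).
move=> [M [Mr HM]]; exists (`|M| + 1) => //.
move=> w wI; apply: (HM (`|M| + 1)).
  by apply: (le_lt_trans (ler_norm M)); rewrite ltrDl.
by exists w => //; rewrite /= in_itv.
Qed.
End S4.

Section Alg.
Context {R : realType} {N : nat}.
Variables (p alpha : R) (fS fNS mS : 'I_N -> R).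

Definition Ec (j k : 'I_N) : R :=
  (1 - alpha) * (p + (1 - p) * ((j <= k)%N)%:R) * fNS k.
Definition cc (j : 'I_N) : R := p + (1 - p) * f0tail alpha fS fNS j.

Lemma sum_filt (F : 'I_N -> R) (j : 'I_N) :
  \sum_(k < N | (j <= k)%N) F k = \sum_(k < N) ((j <= k)%N)%:R * F k.
Proof.
rewrite big_mkcond; apply: eq_bigr => k _.
by case: ifP => _; rewrite ?mul1r ?mul0r.
Qed.

Lemma sum_split_ind (a b : R) (F : 'I_N -> R) (j : 'I_N) :
  \sum_(k < N) (a + b * ((j <= k)%N)%:R) * F k =
  a * \sum_(k < N) F k + b * \sum_(k < N | (j <= k)%N) F k.
Proof.
rewrite sum_filt !mulr_sumr -big_split; apply: eq_bigr => k _ /=; ring.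
Qed.

Lemma Amat_dec (j k : 'I_N) :
  Amat p alpha fS fNS j k = Ec j k - (j == k)%:R * cc j.
Proof.
rewrite /Amat mxE /Ec /cc; case: eqP => [->|_]; rewrite ?leqnn /=; ring.
Qed.

Lemma sum_delta (F : 'I_N -> R) (j : 'I_N) :
  \sum_(k < N) (j == k)%:R * F k = F j.
Proof.
rewrite (bigD1 j) //= eqxx mul1r big1 ?addr0 // => k kj.
by rewrite eq_sym (negbTE kj) mul0r.
Qed.

Lemma sumA_dec (m : 'I_N -> R) (j : 'I_N) :
  \sum_(k < N) Amat p alpha fS fNS j k * m k =
  \sum_(k < N) Ec j k * m k - cc j * m j.
Proof.
rewrite -[cc j * m j](sum_delta (fun k => cc j * m k)) -sumrB.
by apply: eq_bigr => k _; rewrite Amat_dec; ring.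
Qed.

Lemma sumE (m : 'I_N -> R) (j : 'I_N) :
  \sum_(k < N) Ec j k * m k =
  (1 - alpha) * (p * \sum_(k < N) fNS k * m k
                 + (1 - p) * \sum_(k < N | (j <= k)%N) fNS k * m k).
Proof.
rewrite -sum_split_ind mulr_sumr; apply: eq_bigr => k _; rewrite /Ec; ring.
Qed.

Lemma sumB (j : 'I_N) :
  Bvec p alpha fS mS j ord0 =
  alpha * (p * \sum_(k < N) fS k * mS k
           + (1 - p) * \sum_(k < N | (j <= k)%N) fS k * mS k).
Proof.
rewrite /Bvec mxE -sum_split_ind; congr (_ * _); apply: eq_bigr => k _; ring.
Qed.

Lemma ode_alg (m : 'I_N -> R) (j : 'I_N) :
  p * (alpha * (\sum_(k < N) fS k * mS k) + (1 - alpha) * (\sum_(k < N) fNS k * m k))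
  + (1 - p) * (alpha * (\sum_(k < N | (j <= k)%N) fS k * mS k)
               + (1 - alpha) * (\sum_(k < N | (j <= k)%N) fNS k * m k))
  - cc j * m j
  = \sum_(k < N) Amat p alpha fS fNS j k * m k + Bvec p alpha fS mS j ord0.
Proof. rewrite sumA_dec sumE sumB; ring. Qed.

Lemma f0tail_split (j : 'I_N) : f0tail alpha fS fNS j =
  alpha * \sum_(k < N | (j <= k)%N) fS k + (1 - alpha) * \sum_(k < N | (j <= k)%N) fNS k.
Proof. by rewrite /f0tail /f0w big_split /= -!mulr_sumr. Qed.

Hypothesis hp : 0 < p < 1.
Hypothesis ha : 0 < alpha <= 1.
Hypothesis fS0 : forall j, 0 <= fS j.
Hypothesis fNS0 : forall j, 0 <= fNS j.
Hypothesis sfS : \sum_(j < N) fS j = 1.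
Hypothesis sfNS : \sum_(j < N) fNS j = 1.

Lemma Ec_ge0 (j k : 'I_N) : 0 <= Ec j k.
Proof.
rewrite /Ec; case/andP: hp => p0 p1; case/andP: ha => a0 a1.
have b0 : 0 <= ((j <= k)%N)%:R :> R by exact: ler0n.
apply: mulr_ge0; last exact: fNS0.
apply: mulr_ge0; first by rewrite subr_ge0.
apply: addr_ge0; first exact: ltW.
by apply: mulr_ge0 => //; rewrite subr_ge0 ltW.
Qed.

Lemma sumfilt_le (F : 'I_N -> R) (j : 'I_N) : (forall k, 0 <= F k) ->
  0 <= \sum_(k < N | (j <= k)%N) F k <= \sum_(k < N) F k.
Proof.
move=> F0; apply/andP; split; first exact: sumr_ge0.
rewrite sum_filt; apply: ler_sum => k _.
by case: (j <= k)%N; rewrite /= ?mul1r ?mul0r.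
Qed.

Lemma row_dom (j : 'I_N) : \sum_(k < N) Ec j k + p * alpha <= cc j.
Proof.
have := sumE (fun _ => 1) j; under eq_bigr do rewrite mulr1.
under [in RHS]eq_bigr do rewrite mulr1.
under [X in _ = _ * (_ * _ + _ * X)]eq_bigr do rewrite mulr1.
move=> ->; rewrite /cc f0tail_split sfNS.
have /andP[h1 h2] := sumfilt_le fS j fS0.
case/andP: hp => p0 p1; case/andP: ha => a0 a1.
have H : 0 <= (1 - p) * alpha * \sum_(k < N | (j <= k)%N) fS k.
  by apply: mulr_ge0 => //; apply: mulr_ge0; rewrite ?subr_ge0 ?ltW.
lra.
Qed.

Lemma cc_le1 (j : 'I_N) : cc j <= 1.
Proof.
rewrite /cc f0tail_split.
have /andP[h1 h2] := sumfilt_le fS j fS0; have /andP[h3 h4] := sumfilt_le fNS j fNS0.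
rewrite sfS in h2; rewrite sfNS in h4.
case/andP: hp => p0 p1; case/andP: ha => a0 a1.
have hY := ler_wpM2l (ltW a0) h2.
have a2 : 0 <= 1 - alpha by rewrite subr_ge0.
have p2 : 0 <= 1 - p by rewrite subr_ge0 ltW.
have hX := ler_wpM2l a2 h4.
set Z := (X in (1 - p) * X).
have Z1 : Z <= 1 by rewrite /Z; lra.
have := ler_wpM2l p2 Z1.
lra.
Qed.

Lemma cc_gep (j : 'I_N) : p <= cc j.
Proof.
rewrite /cc f0tail_split.
have /andP[h1 h2] := sumfilt_le fS j fS0; have /andP[h3 h4] := sumfilt_le fNS j fNS0.
case/andP: hp => p0 p1; case/andP: ha => a0 a1.
have a2 : 0 <= 1 - alpha by rewrite subr_ge0.
have p2 : 0 <= 1 - p by rewrite subr_ge0 ltW.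
rewrite lerDl; apply: mulr_ge0 => //.
by apply: addr_ge0; apply: mulr_ge0 => //; exact: ltW.
Qed.

Lemma dom_bound (x : 'I_N -> R) (Rb : R) (j : 'I_N) : 0 <= Rb ->
  (forall k, `|x k| <= Rb) ->
  `|\sum_(k < N) Ec j k * x k| <= (cc j - p * alpha) * Rb.
Proof.
move=> Rb0 xb.
apply: (le_trans (ler_norm_sum _ _ _)).
apply: (@le_trans _ _ (\sum_(k < N) Ec j k * Rb)).
  apply: ler_sum => k _; rewrite normrM ger0_norm ?Ec_ge0 //.
  by apply: ler_wpM2l; [exact: Ec_ge0 | exact: xb].
rewrite -mulr_suml; apply: ler_wpM2r => //.
by rewrite lerBrDr; exact: row_dom.
Qed.

Lemma Amat_unit (i0 : 'I_N) : Amat p alpha fS fNS \in unitmx.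
Proof.
rewrite unitmxE unitfE -det_tr; apply/negP => /det0P [v vn0 vA].
have [j0 _ Hj0] := @arg_maxP _ _ _ i0 xpredT (fun j => `|v ord0 j|) isT.
have Hm : forall k, `|v ord0 k| <= `|v ord0 j0| by move=> k; exact: Hj0.
have e0 : \sum_(k < N) Amat p alpha fS fNS j0 k * v ord0 k = 0.
  rewrite [RHS](_ : 0 = (v *m (Amat p alpha fS fNS)^T) ord0 j0); last by rewrite vA mxE.
  by rewrite [RHS]mxE; apply: eq_bigr => k _; rewrite [in RHS]mxE mulrC.
rewrite sumA_dec in e0.
have e1 : \sum_(k < N) Ec j0 k * v ord0 k = cc j0 * v ord0 j0 by apply/eqP; rewrite -subr_eq0 e0.
have := @dom_bound (fun k => v ord0 k) `|v ord0 j0| j0 (normr_ge0 _) Hm.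
rewrite e1 normrM ger0_norm; last by apply: (le_trans (ltW _) (cc_gep j0)); case/andP: hp.
move=> H.
have pa : 0 < p * alpha by case/andP: hp => p0 _; case/andP: ha => a0 _; exact: mulr_gt0.
have z : `|v ord0 j0| = 0.
  apply/eqP; rewrite eq_le normr_ge0 andbT.
  have : p * alpha * `|v ord0 j0| <= 0 by nra.
  by rewrite pmulr_rle0.
move/eqP: vn0; apply; apply/rowP => k; rewrite !mxE.
apply/normr0_eq0; apply/eqP; rewrite eq_le normr_ge0 andbT -z; exact: Hm.
Qed.

End Alg.

Section Contr.
Context {R : realType}.

Lemma is_derive_sqsub (f : R -> R) (t df K : R) : is_derive t (1:R) f df ->
  is_derive t (1:R) (fun s => f s * f s - K) (2 * f t * df).
Proof.
move=> H.
apply: is_derive_ext (is_derive_eq (is_deriveD (is_deriveM' H H) (is_derive_cst (- K) t 1)) _) => /=.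
  by move=> y.
by ring.
Qed.

Lemma sq_le (y K : R) : 0 <= K -> y * y <= K * K -> `|y| <= K.
Proof.
move=> K0 H; have := normr_ge0 y; have : `|y| * `|y| = y * y.
  by rewrite -normrM ger0_norm // -expr2 sqr_ge0.
nra.
Qed.

Lemma contraction (n : nat) (x : 'I_n -> R -> R) (E : 'I_n -> 'I_n -> R)
  (c : 'I_n -> R) (a K0 : R) :
  0 < a -> a <= 1 -> 0 <= K0 ->
  (forall j k, 0 <= E j k) ->
  (forall j, \sum_(k < n) E j k + a <= c j) ->
  (forall j, c j <= 1) ->
  (forall j (t : R), 0 < t ->
     is_derive t (1:R) (x j) (\sum_(k < n) E j k * x k t - c j * x j t)) ->
  (\forall t \near +oo, forall j, `|x j t| <= K0) ->
  forall j, x j t @[t --> +oo] --> 0.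
Proof.
move=> a0 a1 K00 E0 rowd c1 dx HK0.
have c0 : forall j, a <= c j.
  move=> j; apply: le_trans (rowd j); rewrite lerDr; exact: sumr_ge0.
pose th := 1 - a / 2.
have th0 : 0 <= th by rewrite /th; lra.
have th1 : th < 1 by rewrite /th; lra.
pose P Rb := \forall t \near +oo, forall j, `|x j t| <= Rb.
have step : forall Rb, 0 <= Rb -> P Rb -> P (th * Rb).
  move=> Rb; rewrite le_eqVlt => /predU1P[<- | Rb0] HP.
    by rewrite mulr0.
  apply: filter_forall => j.
  have [M0 [M0r HM0]] := HP.
  pose T := `|M0| + 1.
  have T0 : 0 < T by rewrite /T; apply: ltr_pwDr => //.
  have TM : M0 < T by rewrite /T; apply: (le_lt_trans (ler_norm M0)); rewrite ltrDl.
  pose R' := (1 - a) * Rb.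
  pose w := fun t => x j t * x j t - R' * R'.
  pose r := fun t => \sum_(k < n) E j k * x k t.
  pose w' := fun t => 2 * x j t * (r t - c j * x j t).
  have Hw : forall t, T <= t -> is_derive t (1:R) w (w' t) /\ w' t <= - c j * w t.
    move=> t tT; split.
      exact: is_derive_sqsub (dx j t (lt_le_trans T0 tT)).
    have xb : forall k, `|x k t| <= Rb by apply: HM0; exact: lt_le_trans tT.
    have rb : `|r t| <= (c j - a) * Rb.
      apply: (le_trans (ler_norm_sum _ _ _)).
      apply: (@le_trans _ _ (\sum_(k < n) E j k * Rb)).
        apply: ler_sum => k _; rewrite normrM ger0_norm ?E0 //.
        by apply: ler_wpM2l; [exact: E0 | exact: xb].
      rewrite -mulr_suml; apply: ler_wpM2r; first exact: ltW.
      by rewrite lerBrDr; exact: rowd.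
    have rb2 : `|r t| <= c j * R'.
      apply: (le_trans rb); rewrite /R'.
      have H : 0 <= a * (1 - c j) * Rb.
        by apply: mulr_ge0; [apply: mulr_ge0; [exact: ltW | rewrite subr_ge0; exact: c1] | exact: ltW].
      nra.
    have h1 : x j t * r t <= `|x j t| * `|r t|.
      by rewrite -normrM; exact: ler_norm.
    have h2 : `|x j t| * `|r t| <= `|x j t| * (c j * R').
      by apply: ler_wpM2l => //; exact: normr_ge0.
    have h3 : `|x j t| * `|x j t| = x j t * x j t.
      by rewrite -normrM ger0_norm // -expr2 sqr_ge0.
    have h4 : 0 <= c j * ((`|x j t| - R') * (`|x j t| - R')).
      apply: mulr_ge0; first exact: le_trans (ltW a0) (c0 j).
      by rewrite -expr2 sqr_ge0.
    have h3' : c j * (`|x j t| * `|x j t|) = c j * (x j t * x j t) by rewrite h3.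
    rewrite /w' /w; nra.
  have cj0 : 0 < c j by exact: lt_le_trans a0 (c0 j).
  have eps0 : 0 < (th * th - (1 - a) * (1 - a)) * (Rb * Rb).
    apply: mulr_gt0; last exact: mulr_gt0.
    rewrite /th; nra.
  have := @decay R w w' (c j) T cj0 Hw _ eps0.
  apply: filter_app; near=> t => Ht.
  apply: sq_le; first by apply: mulr_ge0 => //; exact: ltW.
  move: Ht; rewrite /w /R'; nra.
have Pn : forall m, P (th ^+ m * K0).
  elim=> [|m IH]; first by rewrite expr0 mul1r.
  by rewrite exprS -mulrA; apply: step => //; apply: mulr_ge0 => //; exact: exprn_ge0.
move=> j; apply/cvgrPdist_le => e e0.
have nth : `|th| < 1 by rewrite ger0_norm.
move/cvgrPdist_le : (cvg_geometric K0 nth) => /(_ e e0) [N0 _ HN0].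
have := HN0 N0 (leqnn N0); rewrite /= sub0r normrN /geometric /=.
move=> HN; have := Pn N0; apply: filter_app; near=> t => Ht.
rewrite sub0r normrN; apply: (le_trans (Ht j)).
apply: (le_trans (ler_norm _)); rewrite mulrC; exact: HN.
Unshelve. all: by end_near.
Qed.
End Contr.

Section Fin.
Context {R : realType}.

Lemma intm_sub_cst (mu : probability R R) g c : mu `[-1, 1]%classic = 1%E -> C1 g ->
  intm mu (fun w => g w - c) = intm mu g - c.
Proof. by move=> m1 cg; rewrite intmD //; [rewrite intm_cst | exact: C1c]. Qed.

Lemma intm_poly2 (mu : probability R R) a b c : mu `[-1, 1]%classic = 1%E ->
  intm mu (fun w => a + b * w + c * (w * w)) =
  a + b * intm mu id + c * intm mu (fun w => w * w).
Proof.
move=> m1.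
have C2 : C1 (fun w : R => w * w) by apply: C1M; exact: C1id.
rewrite intmD; last 2 first.
- by apply: C1D; [exact: C1c | apply: C1M; [exact: C1c | exact: C1id]].
- by apply: C1M; [exact: C1c | exact: C2].
rewrite intmD; [|exact: C1c| apply: C1M; [exact: C1c | exact: C1id]].
by rewrite intm_cst // intmZ ?intmZ //; exact: C1id.
Qed.

Lemma C1norm (g : R -> R) : C1 g -> C1 (fun w => `|g w|).
Proof. by move=> cg x; apply: cvg_norm; exact: cg. Qed.

Lemma final_conv (F : R -> probability R R) (c : R) (phi : R -> R) :
  (forall t, 0 <= t -> F t `[-1, 1]%classic = 1%E) ->
  {within `[-1, 1], continuous phi} ->
  -1 <= c <= 1 ->
  intm (F t) (fun w => (w - c) * (w - c)) @[t --> +oo] --> 0 ->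
  intm (F t) phi @[t --> +oo] --> phi c.
Proof.
move=> m1 cphi cI Hq.
apply/cvgrPdist_le => e e0.
have e20 : 0 < e / 2 by rewrite divr_gt0.
have [d d0 Hd] := @within_eps R phi c cphi cI _ e20.
have [M M0 HM] := @bounded_on R phi cphi.
pose K := 2 * M / (d * d).
have K0 : 0 <= K by rewrite /K divr_ge0 ?mulr_ge0 // ltW.
have pw : forall w, -1 <= w <= 1 ->
    `|phi w - phi c| <= e / 2 + K * ((w - c) * (w - c)).
  move=> w wI.
  have sq0 : 0 <= (w - c) * (w - c) by rewrite -expr2 sqr_ge0.
  have [cw|cw] := ltP `|c - w| d.
    rewrite distrC; apply: (le_trans (ltW (Hd w wI cw))).
    by rewrite lerDl; apply: mulr_ge0.
  have hd : d * d <= (w - c) * (w - c).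
    have : `|c - w| * `|c - w| = (w - c) * (w - c).
      rewrite -normrM ger0_norm; first ring.
      by rewrite -expr2 sqr_ge0.
    move=> <-; apply: ler_pM => //; exact: ltW.
  have hK : 2 * M <= K * ((w - c) * (w - c)).
    have dn0 : d != 0 by exact: lt0r_neq0.
    have -> : K * ((w - c) * (w - c)) = 2 * M * ((w - c) * (w - c) / (d * d)).
      by rewrite /K; field.
    have q1 : 1 <= (w - c) * (w - c) / (d * d) by rewrite ler_pdivlMr ?mulr_gt0 // mul1r.
    by rewrite -{1}[2 * M]mulr1; apply: ler_wpM2l => //; rewrite mulr_ge0.
  apply: (le_trans (ler_normB _ _)).
  have := HM w wI; have := HM c cI; have : 0 <= e / 2 by exact: ltW.
  lra.
have Cq : C1 (fun w => (w - c) * (w - c)).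
  by apply: C1M; apply: C1D; [exact: C1id | exact: C1c | exact: C1id | exact: C1c].
have eK : 0 < e / (2 * (K + 1)) by rewrite divr_gt0 // mulr_gt0 // ltr_pwDr.
move/cvgrPdist_le : Hq => /(_ _ eK); apply: filter_app.
near=> t => Ht.
have t0 : 0 <= t by near: t; apply: nbhs_pinfty_ge; rewrite num_real.
have m1t := m1 t t0.
rewrite sub0r normrN in Ht.
have I0 : 0 <= intm (F t) (fun w => (w - c) * (w - c)).
  rewrite -(intm_cst (F t) 0 m1t); apply: intm_le => //; first exact: C1c.
  by move=> w _; rewrite -expr2 sqr_ge0.
rewrite ger0_norm in Ht => //.
have Cd : C1 (fun w => phi w - phi c) by apply: C1D => //; exact: C1c.
rewrite distrC -intm_sub_cst //.
apply: (le_trans (@intm_norm R (F t) _ Cd)).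
apply: (@le_trans _ _ (intm (F t) (fun w => e / 2 + K * ((w - c) * (w - c))))).
  apply: intm_le => //.
  - exact: C1norm.
  - by apply: C1D; [exact: C1c | apply: C1M; [exact: C1c | exact: Cq]].
rewrite intmD; [|exact: C1c | apply: C1M; [exact: C1c | exact: Cq]].
rewrite intm_cst // intmZ //.
have : K * intm (F t) (fun w => (w - c) * (w - c)) <= K * (e / (2 * (K + 1))).
  exact: ler_wpM2l.
have : K * (e / (2 * (K + 1))) <= e / 2.
  have K1 : 0 < K + 1 by rewrite ltr_pwDr.
  have -> : K * (e / (2 * (K + 1))) = e / 2 * (K / (K + 1)).
    by field; exact: lt0r_neq0.
  rewrite ler_piMr //; first exact: ltW.
  by rewrite ler_pdivrMr // mul1r lerDl.
lra.
Unshelve. all: by end_near.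
Qed.
End Fin.

Section CA.
Context {R : realType} (A : set R).
Definition CA (F : R -> R) := {within A, continuous F}.
Lemma CAD F1 F2 : CA F1 -> CA F2 -> CA (fun t => F1 t + F2 t).
Proof. by move=> c1 c2 x; apply: cvgD; [exact: c1|exact: c2]. Qed.
Lemma CAM F1 F2 : CA F1 -> CA F2 -> CA (fun t => F1 t * F2 t).
Proof. by move=> c1 c2 x; apply: cvgM; [exact: c1|exact: c2]. Qed.
Lemma CAc c : CA (fun _ => c).
Proof. by move=> x; exact: cvg_cst. Qed.
Lemma CAB F1 F2 : CA F1 -> CA F2 -> CA (fun t => F1 t - F2 t).
Proof. by move=> c1 c2 x; apply: cvgB; [exact: c1|exact: c2]. Qed.
Lemma CAsum (I : Type) (r : seq I) (P : pred I) (F : I -> R -> R) :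
  (forall j, CA (F j)) -> CA (fun t => \sum_(j <- r | P j) F j t).
Proof.
move=> cF; elim: r => [|a r IH].
  have -> : (fun t => \sum_(j <- [::] | P j) F j t) = (fun _ => 0).
    by apply: boolp.funext => t; rewrite big_nil.
  exact: CAc.
have -> : (fun t => \sum_(j <- a :: r | P j) F j t) =
   (fun t => (if P a then F a t else 0) + \sum_(j <- r | P j) F j t).
  by apply: boolp.funext => t; rewrite big_cons; case: ifP; rewrite ?add0r.
apply: CAD => //; case: (P a) => //; exact: CAc.
Qed.
End CA.

Lemma intm_affine {R : realType} (mu : probability R R) a b : mu `[-1, 1]%classic = 1%E ->
  intm mu (fun w => a + b * w) = a + b * intm mu id.
Proof.
move=> m1.
have -> : a + b * intm mu id = a + b * intm mu id + 0 * intm mu (fun w => w * w).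
  by rewrite mul0r addr0.
rewrite -intm_poly2 //.
by rewrite /intm; apply: eq_Rintegral => w _; rewrite mul0r addr0.
Qed.

Lemma is_deriveB' {R : realType} {f g : R -> R} {x df dg : R} :
  is_derive x (1:R) f df -> is_derive x (1:R) g dg ->
  is_derive x (1:R) (fun t => f t - g t) (df - dg).
Proof. by move=> H1 H2; apply: is_derive_ext (is_deriveB H1 H2) => y. Qed.

Theorem theorem4p6 (R : realType) (N : nat) (p alpha : R)
  (h fS fNS mS : 'I_N.+1 -> R)
  (f : 'I_N.+1 -> R -> probability R R) :
  0 < p < 1 ->
  0 < alpha <= 1 ->
  0 <= h ord0 ->
  (forall i j : 'I_N.+1, (i < j)%N -> h i < h j) ->
  h ord_max <= 1 ->
  (forall j, 0 <= fS j) -> \sum_(j < N.+1) fS j = 1 ->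
  (forall j, 0 <= fNS j) -> \sum_(j < N.+1) fNS j = 1 ->
  0 < f0w alpha fS fNS ord_max ->
  (forall j, -1 <= mS j <= 1) ->
  (* each f^{NS,i}(t) is a probability measure on [-1,1] *)
  (forall i t, 0 <= t -> f i t `[-1, 1]%classic = 1%E) ->
  (* weak continuity of t |-> f^{NS,i}(t) on [0,+oo) *)
  (forall i (phi : R -> R), {within `[-1, 1], continuous phi} ->
     {within [set t : R | 0 <= t], continuous (fun t => intm (f i t) phi)}) ->
  (* weak formulation of the dynamics, initial datum f^{NS,i}(0) *)
  (forall i t (phi : R -> R), 0 <= t ->
     (forall x, derivable phi x 1) -> continuous (derive1 phi) ->
     intm (f i t) phi =
       intm (f i 0) phi
       + Rintegral lebesgue_measure `[0, t]
           (fun s => intm (f i s) (fun w =>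
              derive1 phi w *
              (p * (mtot alpha fS fNS mS f s - w)
               + (1 - p) * (beta alpha fS fNS mS f i s
                            - f0tail alpha fS fNS i * w))))) ->
  Amat p alpha fS fNS \in unitmx /\
  (forall i (phi : R -> R), {within `[-1, 1], continuous phi} ->
     (fun t => intm (f i t) phi) @ +oo -->
       phi ((- (invmx (Amat p alpha fS fNS) *m Bvec p alpha fS mS)) i ord0)).
Proof.
move=> hp ha h0 hmono h1 fS0 sfS fNS0 sfNS f0pos mSb Hmass Hcont Hweak.
have Aunit : Amat p alpha fS fNS \in unitmx := Amat_unit p alpha fS fNS hp ha fS0 fNS0 sfNS ord0.
split => // i phi cphi.
pose D0 := `[0, +oo[%classic : set R.
have Hcont' : forall j psi, C1 psi -> CA D0 (fun t => intm (f j t) psi).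
  move=> j psi cpsi; have := Hcont j psi cpsi.
  have -> : [set t : R | 0 <= t] = D0.
    by apply/seteqP; split => x /=; rewrite /D0 /= in_itv /= andbT.
  done.
pose m j t := mNS f j t.
pose q j t := intm (f j t) (fun w : R => w * w).
pose cj j := cc p alpha fS fNS j.
pose g j s := p * mtot alpha fS fNS mS f s + (1 - p) * beta alpha fS fNS mS f j s.
pose G j s := g j s - cj j * m j s.
pose H j s := 2 * g j s * m j s - 2 * cj j * q j s.
have Cm : forall j, CA D0 (m j) by move=> j; exact: Hcont' j id C1id.
have Cq : forall j, CA D0 (q j).
  by move=> j; apply: Hcont'; apply: C1M; exact: C1id.
have Cg : forall j, CA D0 (g j).
  move=> j; rewrite /g /mtot /beta.
  apply: CAD; apply: CAM; try exact: CAc; apply: CAD; apply: CAM; try exact: CAc;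
    apply: CAsum => k; apply: CAM; try exact: CAc; exact: Cm.
have CG : forall j, CA D0 (G j).
  by move=> j; apply: CAB; [exact: Cg | apply: CAM; [exact: CAc | exact: Cm]].
have CH : forall j, CA D0 (H j).
  move=> j; apply: CAB; apply: CAM; try exact: CAc.
  - by apply: CAM; [exact: CAc | exact: Cg].
  - exact: Cm.
  - exact: Cq.
have dId : forall x : R, derivable (id : R -> R) x 1.
  by move=> x; apply: ex_derive; exact: is_derive_id.
have d1 : derive1 (id : R -> R) = fun _ => 1.
  by apply: boolp.funext => x; exact: is_derive1_val (is_derive_id x (1:R)).
have cd1 : continuous (derive1 (id : R -> R)) by rewrite d1 => x; exact: cvg_cst.
have ODE1 : forall j t, 0 <= t -> m j t = m j 0 + Rintegral lebesgue_measure `[0, t]%classic (G j).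
  move=> j t t0; rewrite /m /mNS (Hweak j t id t0 dId cd1); congr (_ + _).
  apply: eq_Rintegral => s; rewrite inE /= in_itv /= => /andP[s0 _].
  rewrite d1.
  have -> : (fun w : R => 1 * (p * (mtot alpha fS fNS mS f s - w) +
      (1 - p) * (beta alpha fS fNS mS f j s - f0tail alpha fS fNS j * w))) =
      (fun w => g j s + (- cj j) * w).
    by apply: boolp.funext => w; rewrite /g /cj /cc; ring.
  by rewrite intm_affine ?Hmass // /G /m /mNS; ring.
pose sq := fun w : R => w * w.
have dsq : forall x : R, is_derive x (1:R) sq (2 * x).
  move=> x; apply: (is_derive_eq (is_deriveM' (is_derive_id x (1:R)) (is_derive_id x (1:R)))).
  by rewrite /=; ring.
have dSq : forall x : R, derivable sq x 1 by move=> x; apply: ex_derive; exact: dsq.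
have d2 : derive1 sq = fun x => 2 * x.
  by apply: boolp.funext => x; exact: is_derive1_val (dsq x).
have cd2 : continuous (derive1 sq).
  by rewrite d2 => x; apply: cvgM; [exact: cvg_cst | exact: cvg_id].
have ODE2 : forall j t, 0 <= t -> q j t = q j 0 + Rintegral lebesgue_measure `[0, t]%classic (H j).
  move=> j t t0; rewrite /q (Hweak j t sq t0 dSq cd2); congr (_ + _).
  apply: eq_Rintegral => s; rewrite inE /= in_itv /= => /andP[s0 _].
  rewrite d2.
  have -> : (fun w : R => 2 * w * (p * (mtot alpha fS fNS mS f s - w) +
      (1 - p) * (beta alpha fS fNS mS f j s - f0tail alpha fS fNS j * w))) =
      (fun w => 0 + (2 * g j s) * w + (- 2 * cj j) * (w * w)).
    by apply: boolp.funext => w; rewrite /g /cj /cc; ring.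
  by rewrite intm_poly2 ?Hmass // /H /m /mNS /q; ring.
have D1 : forall j (t : R), 0 < t -> is_derive t (1:R) (m j) (G j t).
  by move=> j; apply: ftc_deriv; [exact: CG | exact: ODE1].
have D2 : forall j (t : R), 0 < t -> is_derive t (1:R) (q j) (H j t).
  by move=> j; apply: ftc_deriv; [exact: CH | exact: ODE2].
pose A := Amat p alpha fS fNS.
pose B := Bvec p alpha fS mS.
pose ms k := (- (invmx A *m B)) k ord0.
have EqB : forall j, \sum_(k < N.+1) A j k * ms k + B j ord0 = 0.
  move=> j.
  have AM : A *m (- (invmx A *m B)) = - B by rewrite mulmxN mulKVmx.
  have := congr1 (fun M : 'cV[R]_(N.+1) => M j ord0) AM.
  rewrite /= [LHS]mxE [RHS]mxE /ms => ->; exact: addNr.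
pose x j t := m j t - ms j.
have Dx : forall j (t : R), 0 < t ->
    is_derive t (1:R) (x j) (\sum_(k < N.+1) Ec p alpha fNS j k * x k t - cj j * x j t).
  move=> j t t0.
  have e1 : G j t = \sum_(k < N.+1) A j k * m k t + B j ord0 :=
    ode_alg p alpha fS fNS mS (fun k => m k t) j.
  have e2 := sumA_dec p alpha fS fNS (fun k => x k t) j.
  have e3 : \sum_(k < N.+1) A j k * x k t =
      \sum_(k < N.+1) A j k * m k t - \sum_(k < N.+1) A j k * ms k.
    by rewrite -sumrB; apply: eq_bigr => k _; rewrite /x; ring.
  have hb := EqB j.
  apply: is_derive_ext (is_derive_eq (is_deriveB (D1 j t t0) (is_derive_cst (ms j) t 1)) _) => //.
  rewrite subr0 e1 /cj -e2 e3; lra.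
have mb : forall j t, 0 <= t -> -1 <= m j t <= 1.
  move=> j t t0; rewrite /m /mNS; apply/andP; split.
  - rewrite -[X in X <= _](intm_cst (f j t) (-1) (Hmass j t t0)).
    by apply: intm_le; [exact: C1c | exact: C1id | move=> w /andP[]].
  - rewrite -[X in _ <= X](intm_cst (f j t) 1 (Hmass j t t0)).
    by apply: intm_le; [exact: C1id | exact: C1c | move=> w /andP[]].
pose K0 := 1 + \sum_(k < N.+1) `|ms k|.
have K00 : 0 <= K0 by rewrite /K0 addr_ge0 // sumr_ge0.
have HK0 : \forall t \near +oo, forall j, `|x j t| <= K0.
  near=> t => j.
  have t0 : 0 <= t by near: t; apply: nbhs_pinfty_ge; rewrite num_real.
  rewrite /x; apply: (le_trans (ler_normB _ _)); apply: lerD.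
    by rewrite ler_norml; exact: mb.
  by rewrite (bigD1 j) //= lerDl sumr_ge0.
have a0 : 0 < p * alpha by case/andP: hp => ? _; case/andP: ha => ? _; exact: mulr_gt0.
have a1 : p * alpha <= 1 by case/andP: hp => ? ?; case/andP: ha => ? ?; nra.
have xconv := @contraction R N.+1 x (Ec p alpha fNS) cj (p * alpha) K0 a0 a1 K00
  (Ec_ge0 p alpha fNS hp ha fNS0) (row_dom p alpha fS fNS hp ha fS0 sfNS)
  (cc_le1 p alpha fS fNS hp ha fS0 fNS0 sfS sfNS) Dx HK0.
have mconv : m i t @[t --> +oo] --> ms i.
  apply/cvgrPdist_le => e e0.
  move/cvgrPdist_le : (xconv i) => /(_ e e0); apply: filter_app.
  by near=> t => Ht; rewrite distrC; move: Ht; rewrite /x sub0r normrN.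
pose c := ms i.
have cI : -1 <= c <= 1.
  have := @closed_cvg _ _ _ _ (fun t => m i t) `[-1, 1]%classic
    (@interval_closed R (BLeft (-1)) (BRight 1) isT isT) _ c mconv.
  rewrite /= in_itv /=; apply.
  near=> t; rewrite /= in_itv /=; apply: mb.
  by near: t; apply: nbhs_pinfty_ge; rewrite num_real.
pose V t := q i t - m i t * m i t.
have cj0 : 0 < 2 * cj i.
  apply: mulr_gt0 => //; apply: lt_le_trans (cc_gep p alpha fS fNS hp ha fS0 fNS0 i).
  by case/andP: hp.
have HV : forall t : R, 1 <= t -> is_derive t (1:R) V (- (2 * cj i) * V t) /\
    - (2 * cj i) * V t <= - (2 * cj i) * V t.
  move=> t t1; split; last exact: lexx.
  have t0 : 0 < t by exact: lt_le_trans ltr01 t1.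
  have dq : is_derive t (1:R) (q i) (H i t) := D2 i t t0.
  have dm : is_derive t (1:R) (m i) (G i t) := D1 i t t0.
  have dmm := is_deriveM' dm dm.
  have dV := is_deriveB' dq dmm.
  apply: (is_derive_eq dV).
  rewrite /V /H /G.
  generalize (g i t) (m i t) (q i t) (cj i); intros u1 u2 u3 u4; ring.
have Vdec := @decay R V (fun t => - (2 * cj i) * V t) (2 * cj i) 1 cj0 HV.
have Hq : intm (f i t) (fun w => (w - c) * (w - c)) @[t --> +oo] --> 0.
  apply/cvgrPdist_le => e e0.
  have e20 : 0 < e / 2 by rewrite divr_gt0.
  have em0 : 0 < Num.min 1 (e / 2) by rewrite lt_min ltr01 e20.
  move/cvgrPdist_le : mconv => /(_ _ em0) Hm.
  have HVe := Vdec _ e20.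
  near=> t.
  have t0 : 0 <= t by near: t; apply: nbhs_pinfty_ge; rewrite num_real.
  have m1t := Hmass i t t0.
  have I0 : 0 <= intm (f i t) (fun w => (w - c) * (w - c)).
    rewrite -(intm_cst (f i t) 0 m1t); apply: intm_le.
    - exact: C1c.
    - by apply: C1M; apply: C1D; [exact: C1id | exact: C1c | exact: C1id | exact: C1c].
    - by move=> w _; rewrite -expr2 sqr_ge0.
  rewrite sub0r normrN ger0_norm //.
  have -> : (fun w : R => (w - c) * (w - c)) = (fun w => c * c + (- 2 * c) * w + 1 * (w * w)).
    by apply: boolp.funext => w; ring.
  rewrite intm_poly2 //.
  have hV : V t <= e / 2 by near: t; exact: HVe.
  have hm : `|c - m i t| <= Num.min 1 (e / 2) by near: t; exact: Hm.
  move: hm; rewrite le_min => /andP[hm1 hm2].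
  have hsq : (c - m i t) * (c - m i t) <= `|c - m i t|.
    have -> : (c - m i t) * (c - m i t) = `|c - m i t| * `|c - m i t|.
      by rewrite -normrM ger0_norm // -expr2 sqr_ge0.
    by rewrite -[X in _ <= X]mulr1; apply: ler_wpM2l.
  move: hV; rewrite /V /q /m /mNS => hV.
  have : intm (f i t) id = mNS f i t by [].
  move: hsq; rewrite /m => hsq _.
  rewrite /mNS in hsq; lra.
exact: final_conv (Hmass i) cphi cI Hq.
Unshelve. all: by end_near.
Qed.
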